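(* Let $f=\frac1n\sum_{z=1}^nf_z$ where each $\nabla f_z$ is $L$-Lipschitz and $\|\nabla f_z(x)\|\le l$ for all $x$ and $z$. In an SCSG inner loop (see context) with $b\ge1$, $n\ge8b$ and $\eta L=\gamma(b/n)^{2/3}$, $\gamma\le\frac13$, each iteration satisfies $$\mathbb{E}[f(x_t)-f(x_{t-1})]\le\frac{5l^2\gamma^2}{L}\left(\frac bn\right)^{4/3}.$$
   Context: SCSG inner loop with snapshot $\tilde x$: $\tilde\mu=\nabla f(\tilde x)$, $x_0=\tilde x$, and $x_t=x_{t-1}-\eta(\nabla f_{I_t}(x_{t-1})-\nabla f_{I_t}(\tilde x)+\tilde\mu)$, where $I_t\subset[n]$ is a uniformly random subset of size $b$ and $\nabla f_I=\frac1{|I|}\sum_{i\in I}\nabla f_i$. *)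

(* Defs.v *)
From HB Require Import structures.
From mathcomp Require Import all_boot all_order all_algebra.
From mathcomp Require Import all_classical all_reals all_analysis.
Set Implicit Arguments. Unset Strict Implicit. Unset Printing Implicit Defensive.
Import Order.TTheory GRing.Theory Num.Theory.
Import numFieldNormedType.Exports.
Local Open Scope ring_scope.

Section SCSG.
Variables (R : realType) (d n : nat).

Definition dotv (u v : 'rV[R]_d) : R := \sum_(i < d) u ord0 i * v ord0 i.
Definition norm2 (u : 'rV[R]_d) : R := Num.sqrt (dotv u u).

Definition favg (f : 'I_n -> 'rV[R]_d -> R) (x : 'rV[R]_d) : R :=
  n%:R^-1 * \sum_(z < n) f z x.
Definition fullgrad (g : 'I_n -> 'rV[R]_d -> 'rV[R]_d) (x : 'rV[R]_d) : 'rV[R]_d :=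
  n%:R^-1 *: \sum_(z < n) g z x.

Definition gradI (g : 'I_n -> 'rV[R]_d -> 'rV[R]_d) (I : {set 'I_n}) (x : 'rV[R]_d)
  : 'rV[R]_d := (#|I|%:R)^-1 *: \sum_(i in I) g i x.

Definition scsg_step (g : 'I_n -> 'rV[R]_d -> 'rV[R]_d) (eta : R) (xt : 'rV[R]_d)
  (x : 'rV[R]_d) (I : {set 'I_n}) : 'rV[R]_d :=
  x - eta *: (gradI g I x - gradI g I xt + fullgrad g xt).

Definition scsg_iter (g : 'I_n -> 'rV[R]_d -> 'rV[R]_d) (eta : R) (xt : 'rV[R]_d)
  (s : seq {set 'I_n}) : 'rV[R]_d := foldl (scsg_step g eta xt) xt s.

(* expectation over k independent minibatches, each uniform among the b-subsets of [n] *)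
Definition valid_batches (b k : nat) : pred (k.-tuple {set 'I_n}) :=
  fun s => all (fun I : {set 'I_n} => #|I| == b) s.
Definition Ebatch (b k : nat) (F : k.-tuple {set 'I_n} -> R) : R :=
  (\sum_(s : k.-tuple {set 'I_n} | valid_batches b s) F s)
    / #|[pred s : k.-tuple {set 'I_n} | valid_batches b s]|%:R.

End SCSG.

(* Main.v *)
Require Import Defs.
From HB Require Import structures.
From mathcomp Require Import all_boot all_order all_algebra.
From mathcomp Require Import all_classical all_reals all_analysis.
From mathcomp Require Import ring lra.
From mathcomp Require Import fingroup perm.
Import Order.TTheory GRing.Theory Num.Theory.
Import numFieldNormedType.Exports.
Local Open Scope ring_scope.

Section S.
Variables (R : realType) (d : nat).
Implicit Types u v w : 'rV[R]_d.

Lemma dotvC u v : dotv u v = dotv v u.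
Proof. by apply: eq_bigr => i _; rewrite mulrC. Qed.
Lemma dotvDl u v w : dotv (u + v) w = dotv u w + dotv v w.
Proof. by rewrite /dotv -big_split; apply: eq_bigr => i _; rewrite mxE mulrDl. Qed.
Lemma dotvZl (k : R) u v : dotv (k *: u) v = k * dotv u v.
Proof. by rewrite /dotv mulr_sumr; apply: eq_bigr => i _; rewrite mxE mulrA. Qed.
Lemma dotvNl u v : dotv (- u) v = - dotv u v.
Proof. by rewrite -scaleN1r dotvZl mulN1r. Qed.
Lemma dotvBl u v w : dotv (u - v) w = dotv u w - dotv v w.
Proof. by rewrite dotvDl dotvNl. Qed.
Lemma dotvDr u v w : dotv w (u + v) = dotv w u + dotv w v.
Proof. by rewrite dotvC dotvDl !(dotvC w). Qed.
Lemma dotvZr (k : R) u v : dotv v (k *: u) = k * dotv v u.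
Proof. by rewrite dotvC dotvZl dotvC. Qed.
Lemma dotvNr u v : dotv v (- u) = - dotv v u.
Proof. by rewrite dotvC dotvNl dotvC. Qed.
Lemma dotvBr u v w : dotv w (u - v) = dotv w u - dotv w v.
Proof. by rewrite dotvDr dotvNr. Qed.
Lemma dotv0l v : dotv 0 v = 0.
Proof. by rewrite -(scale0r 0) dotvZl mul0r. Qed.
Lemma dotv_suml (I : finType) (P : pred I) (F : I -> 'rV[R]_d) v :
  dotv (\sum_(i | P i) F i) v = \sum_(i | P i) dotv (F i) v.
Proof.
elim/big_rec2: _ => [|i y1 y2 _ <-]; first exact: dotv0l.
by rewrite dotvDl.
Qed.
Lemma dotv_ge0 u : 0 <= dotv u u.
Proof. by apply: sumr_ge0 => i _; rewrite -expr2 sqr_ge0. Qed.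
Lemma dotv_eq0 u : dotv u u = 0 -> u = 0.
Proof.
move=> /eqP; rewrite psumr_eq0; last by move=> i _; rewrite -expr2 sqr_ge0.
move=> /allP H; apply/matrixP => i j; rewrite mxE (ord1 i).
by apply/eqP; have := H j (mem_index_enum j); rewrite -expr2 sqrf_eq0.
Qed.
Lemma norm2_ge0 u : 0 <= norm2 u.
Proof. exact: sqrtr_ge0. Qed.
Lemma norm2_sq u : norm2 u ^+ 2 = dotv u u.
Proof. by rewrite sqr_sqrtr // dotv_ge0. Qed.
Lemma norm2Z (k : R) u : norm2 (k *: u) = `|k| * norm2 u.
Proof.
by rewrite /norm2 dotvZl dotvZr mulrA sqrtrM ?sqr_ge0 // -expr2 sqrtr_sqr.
Qed.
Lemma norm2N u : norm2 (- u) = norm2 u.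
Proof. by rewrite -scaleN1r norm2Z normrN1 mul1r. Qed.

Lemma CS u v : dotv u v <= norm2 u * norm2 v.
Proof.
have [u0|ua] := eqVneq (norm2 u) 0.
  have := norm2_sq u; rewrite u0 expr0n /= => /esym/dotv_eq0 ->.
  by rewrite dotv0l mulr_ge0 ?norm2_ge0.
have [v0|va] := eqVneq (norm2 v) 0.
  have := norm2_sq v; rewrite v0 expr0n /= => /esym/dotv_eq0 ->.
  by rewrite dotvC dotv0l mulr_ge0 ?norm2_ge0.
set a := norm2 u; set c := norm2 v.
have a0 : 0 < a by rewrite lt_def ua norm2_ge0.
have c0 : 0 < c by rewrite lt_def va norm2_ge0.
have := dotv_ge0 (c *: u - a *: v).
rewrite !dotvBl !dotvBr !dotvZl !dotvZr -!norm2_sq (dotvC v u) -/a -/c.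
move=> H.
have ac0 : 0 < a * c by apply: mulr_gt0.
nra.
Qed.

Lemma norm2D u v : norm2 (u + v) <= norm2 u + norm2 v.
Proof.
rewrite -(ler_pXn2r (_ : 0 < 2)%N) ?nnegrE ?addr_ge0 ?norm2_ge0 //.
rewrite norm2_sq dotvDl !dotvDr (dotvC v u) sqrrD !norm2_sq.
have := CS u v; lra.
Qed.

Lemma norm2_sum (I : finType) (P : pred I) (F : I -> 'rV[R]_d) :
  norm2 (\sum_(i | P i) F i) <= \sum_(i | P i) norm2 (F i).
Proof.
elim/big_rec2: _ => [|i y1 y2 _ H].
  by rewrite /norm2 dotv0l sqrtr0.
by apply: (le_trans (norm2D _ _)); rewrite lerD2l.
Qed.


Lemma aff_diff (x h : 'rV[R]_d) (s : R) :
  is_diff s (fun s : R => x + s *: h) (fun u : R => u *: h).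
Proof.
have -> : (fun u : R => u *: h) = (fun u : R => (0 : 'rV[R]_d) + u *: h).
  by apply/funext=> u; rewrite add0r.
apply: is_diffD.
Qed.

Lemma phi_derive (F : 'rV[R]_d -> R) (G : 'rV[R]_d -> 'rV[R]_d) (x h : 'rV[R]_d) (s : R) :
  (forall y, differentiable F y /\ 'd F y =1 dotv (G y)) ->
  is_derive s 1 (fun s : R => F (x + s *: h)) (dotv (G (x + s *: h)) h).
Proof.
move=> HF.
have da := aff_diff x h s.
have dF := (HF (x + s *: h)).1.
have dc : differentiable (F \o (fun s : R => x + s *: h)) s.
  by apply: differentiable_comp => //.
apply: DeriveDef; first exact: diff_derivable.
rewrite deriveE // diff_comp //= (HF _).2 diff_val scale1r //.
Qed.

Lemma descent (F : 'rV[R]_d -> R) (G : 'rV[R]_d -> 'rV[R]_d) (L : R) :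
  (forall y, differentiable F y /\ 'd F y =1 dotv (G y)) ->
  (forall x y, norm2 (G x - G y) <= L * norm2 (x - y)) ->
  forall x h, F (x + h) - F x <= dotv (G x) h + L / 2 * dotv h h.
Proof.
move=> HF HL x h.
pose c := dotv (G x) h; pose k := L / 2 * dotv h h.
pose psi := fun s : R => F (x + s *: h) - (s * c + s ^+ 2 * k).
have dpsi : forall s : R, is_derive s 1 psi
    (dotv (G (x + s *: h)) h - (c + (2 * s) * k)).
  move=> s; rewrite /psi.
  have dphi := phi_derive F G x h s HF.
  apply: is_deriveB.
  apply: is_derive_eq.
  by rewrite !scaler0 !add0r /GRing.scale /= !mulr1; ring.
have le : psi 1 <= psi 0.
  apply: (@ler0_derive1_le_cc _ psi 0 1).
  - move=> s _; have [] := dpsi s; done.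
  - move=> s; rewrite in_itv /= => /andP[s0 s1].
    rewrite derive1E (@derive_val _ _ _ _ _ _ _ (dpsi s)).
    have e1 : dotv (G (x + s *: h)) h - c = dotv (G (x + s *: h) - G x) h.
      by rewrite dotvBl.
    have h1 := CS (G (x + s *: h) - G x) h.
    have h2 := HL (x + s *: h) x.
    rewrite [x + _ - _]addrC addKr norm2Z (ger0_norm (ltW s0)) in h2.
    have h3 := ler_wpM2r (norm2_ge0 h) h2.
    have e2 : L * (s * norm2 h) * norm2 h = L * s * dotv h h.
      by rewrite -norm2_sq; ring.
    rewrite e2 in h3.
    rewrite /k; lra.
  - apply: continuous_subspaceT => s.
    by apply/differentiable_continuous/derivable1_diffP; case: (dpsi s).
  all: rewrite ?in_itv /= ?lexx ?ler01 //.
move: le; rewrite /psi scale0r scale1r addr0 /c /k; lra.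
Qed.

End S.

Section C.
Variables (R : realType) (n b : nat).
Definition cnt (i : 'I_n) : R :=
  \sum_(I : {set 'I_n} | #|I| == b) (i \in I)%:R.
Lemma cnt_sym i j : cnt i = cnt j.
Proof.
pose phi := fun I : {set 'I_n} => (tperm i j) @: I.
have phiK : cancel phi phi.
  move=> I; rewrite /phi -imset_comp.
  rewrite (eq_imset _ (g := id)).
    by rewrite imset_id.
  by move=> k /=; rewrite tpermK.
rewrite /cnt (reindex_inj (can_inj phiK)) /=.
apply: eq_big => I.
  rewrite /phi card_imset //; exact: perm_inj.
move=> _; rewrite /phi.
rewrite -{1}(tpermR i j).
rewrite mem_imset //; exact: perm_inj.
Qed.

Lemma cnt_total i : n%:R * cnt i = b%:R * #|[set I : {set 'I_n} | #|I| == b]|%:R.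
Proof.
have -> : n%:R * cnt i = \sum_(k < n) cnt k.
  rewrite (eq_bigr (fun=> cnt i)); last by move=> k _; rewrite (cnt_sym k i).
  by rewrite sumr_const card_ord mulr_natl.
rewrite /cnt exchange_big /=.
rewrite (eq_bigr (fun=> b%:R)); last first.
  move=> I /eqP HI.
  rewrite -HI -[#|I|%:R]/(1 *+ #|I|) -sumr_const [RHS]big_mkcond /=.
  by apply: eq_bigr => k _; case: (k \in I).
rewrite (eq_bigl (fun I => I \in [set I : {set 'I_n} | #|I| == b])); last by move=> I; rewrite inE.
by rewrite sumr_const mulr_natr.
Qed.

Lemma sum_batches (V : lmodType R) (w : 'I_n -> V) (i0 : 'I_n) :
  \sum_(I : {set 'I_n} | #|I| == b) \sum_(i in I) w i
  = cnt i0 *: \sum_i w i.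
Proof.
under eq_bigr => I _ do rewrite big_mkcond /=.
rewrite exchange_big scaler_sumr /=.
apply: eq_bigr => k _.
rewrite (cnt_sym i0 k) /cnt scaler_suml.
by apply: eq_bigr => I _; case: (k \in I); rewrite ?scale1r ?scale0r.
Qed.
End C.

Section M.
Variables (R : realType) (d n b : nat).
Variables (f : 'I_n -> 'rV[R]_d -> R) (g : 'I_n -> 'rV[R]_d -> 'rV[R]_d).
Variables (L l eta : R) (xt : 'rV[R]_d).
Hypothesis HF : forall z x, differentiable (f z) x /\ 'd (f z) x =1 (fun h => dotv (g z x) h).
Hypothesis HL : forall z x y, norm2 (g z x - g z y) <= L * norm2 (x - y).
Hypothesis Hl : forall z x, norm2 (g z x) <= l.
Hypothesis n0 : (0 < n)%N.
Hypothesis b0 : (0 < b)%N.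

Lemma norm_gradI (I : {set 'I_n}) y : (0 < #|I|)%N -> norm2 (gradI g I y) <= l.
Proof.
move=> I0; rewrite /gradI norm2Z ger0_norm ?invr_ge0 ?ler0n //.
have H1 := @norm2_sum R d _ (fun i => i \in I) (fun i => g i y).
have H2 : \sum_(i in I) norm2 (g i y) <= \sum_(i in I) l.
  by apply: ler_sum => i _; exact: Hl.
rewrite sumr_const in H2.
have Ip : 0 < (#|I|%:R : R) by rewrite ltr0n.
have Ipi : 0 <= (#|I|%:R : R)^-1 by rewrite invr_ge0 ltW.
have := ler_wpM2l Ipi (le_trans H1 H2).
by rewrite -[l *+ _]mulr_natr mulrCA mulVf ?mulr1 // gt_eqF.
Qed.

Lemma norm_fullgrad y : norm2 (fullgrad g y) <= l.
Proof.
rewrite /fullgrad norm2Z ger0_norm ?invr_ge0 ?ler0n //.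
have H1 := @norm2_sum R d _ (fun _ => true) (fun i => g i y).
have H2 : \sum_(i < n) norm2 (g i y) <= \sum_(i < n) l.
  by apply: ler_sum => i _; exact: Hl.
rewrite sumr_const card_ord in H2.
have Ip : 0 < (n%:R : R) by rewrite ltr0n.
have Ipi : 0 <= (n%:R : R)^-1 by rewrite invr_ge0 ltW.
have := ler_wpM2l Ipi (le_trans H1 H2).
by rewrite -[l *+ _]mulr_natr mulrCA mulVf ?mulr1 // gt_eqF.
Qed.

Definition Cr : R := #|[set I : {set 'I_n} | #|I| == b]|%:R.

Lemma sum_gradI y :
  \sum_(I : {set 'I_n} | #|I| == b) gradI g I y = Cr *: fullgrad g y.
Proof.
have i0 : 'I_n := Ordinal n0.
under eq_bigr => I /eqP HI do rewrite /gradI HI.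
rewrite -scaler_sumr (sum_batches R n b _ _ i0) /fullgrad !scalerA.
congr (_ *: _).
have := cnt_total R n b i0.
rewrite -/Cr => H.
have nz : (n%:R : R) != 0 by rewrite pnatr_eq0 -lt0n.
have bz : (b%:R : R) != 0 by rewrite pnatr_eq0 -lt0n.
apply: (mulfI nz); rewrite mulrCA H mulrA.
by rewrite mulVf // mul1r mulrCA mulfV // mulr1.
Qed.


Hypothesis L0 : 0 <= L.
Hypothesis eta0 : 0 <= eta.

Definition vI (y : 'rV[R]_d) (I : {set 'I_n}) := gradI g I y - gradI g I xt + fullgrad g xt.

Lemma step_one (y : 'rV[R]_d) (I : {set 'I_n}) : #|I| == b ->
  favg f (scsg_step g eta xt y I) - favg f y <=
  - eta * dotv (fullgrad g y) (vI y I) + L / 2 * eta ^+ 2 * (3 * l) ^+ 2.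
Proof.
move=> /eqP HI.
set v := vI y I.
have hstep : scsg_step g eta xt y I = y + (- (eta *: v)) by [].
rewrite hstep /favg -mulrBr -sumrB.
set h := - (eta *: v).
have S : \sum_(z < n) (f z (y + h) - f z y) <= \sum_(z < n) (dotv (g z y) h + L / 2 * dotv h h).
  apply: ler_sum => z _.
  by apply: (descent R d (f z) (g z) L).
have ninv : 0 <= (n%:R : R)^-1 by rewrite invr_ge0 ler0n.
apply: (le_trans (ler_wpM2l ninv S)).
rewrite big_split /= -dotv_suml sumr_const card_ord mulrDr.
have nz : (n%:R : R) != 0 by rewrite pnatr_eq0 -lt0n.
rewrite -[L / 2 * _ *+ n]mulr_natr mulrCA mulVf // mulr1.
have e0 : (n%:R)^-1 * dotv (\sum_(z < n) g z y) h = dotv (fullgrad g y) h.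
  by rewrite /fullgrad dotvZl.
rewrite e0.
have e1 : dotv (fullgrad g y) h = - eta * dotv (fullgrad g y) v.
  by rewrite /h dotvNr dotvZr mulNr.
have e2 : dotv h h = eta ^+ 2 * dotv v v.
  by rewrite /h dotvNl dotvNr opprK dotvZl dotvZr mulrA -expr2.
rewrite e1 e2 mulrA.
apply: lerD => //.
have nv : norm2 v <= 3 * l.
  rewrite /v /vI.
  apply: (le_trans (norm2D _ _ _ _)).
  have := norm2D R d (gradI g I y) (- gradI g I xt).
  rewrite norm2N.
  have bI : (0 < #|I|)%N by rewrite HI.
  have := norm_gradI I y bI; have := norm_gradI I xt bI; have := norm_fullgrad xt.
  lra.
have nv0 := norm2_ge0 R d v.
have : dotv v v <= (3 * l) ^+ 2 by rewrite -norm2_sq; nra.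
apply: ler_wpM2l.
by apply: mulr_ge0; [apply: mulr_ge0 => //; rewrite invr_ge0 ler0n | exact: sqr_ge0].
Qed.

Lemma step_sum (y : 'rV[R]_d) (B : R) : L / 2 * eta ^+ 2 * (3 * l) ^+ 2 <= B ->
  \sum_(I : {set 'I_n} | #|I| == b) (favg f (scsg_step g eta xt y I) - favg f y - B) <= 0.
Proof.
move=> KB.
set K := L / 2 * eta ^+ 2 * (3 * l) ^+ 2.
apply: (@le_trans _ _ (\sum_(I : {set 'I_n} | #|I| == b)
            ((- eta * dotv (fullgrad g y) (vI y I) + K) - B))).
  by apply: ler_sum => I HI; apply: lerB => //; exact: step_one.
have -> : \sum_(I : {set 'I_n} | #|I| == b) ((- eta * dotv (fullgrad g y) (vI y I) + K) - B)
   = - eta * dotv (fullgrad g y) (\sum_(I : {set 'I_n} | #|I| == b) vI y I)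
     + \sum_(I : {set 'I_n} | #|I| == b) (K - B).
  rewrite dotvC dotv_suml mulr_sumr -big_split; apply: eq_bigr => I _.
  by rewrite dotvC -addrA.
have sc : \sum_(I : {set 'I_n} | #|I| == b) fullgrad g xt = Cr *: fullgrad g xt.
  rewrite (eq_bigl (fun I => I \in [set I : {set 'I_n} | #|I| == b])); last by move=> I; rewrite inE.
  by rewrite sumr_const /Cr scaler_nat.
rewrite /vI big_split /= sumrB !sum_gradI sc addrNK dotvZr.
have A2 : \sum_(I : {set 'I_n} | #|I| == b) (K - B) <= 0.
  by apply: sumr_le0 => I _; rewrite subr_le0.
have A1 : - eta * (Cr * dotv (fullgrad g y) (fullgrad g y)) <= 0.
  rewrite mulNr oppr_le0; apply: mulr_ge0 => //; apply: mulr_ge0.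
    by rewrite /Cr ler0n.
  exact: dotv_ge0.
by have := lerD A1 A2; rewrite addr0.
Qed.

End M.

Lemma take_sizeP (T : Type) (t : nat) (s : t.+1.-tuple T) : size (take t s) == t.
Proof. by rewrite size_takel ?size_tuple. Qed.

Lemma rcons_take_last (T : Type) (t : nat) (ss : seq T) x0 :
  size ss = t.+1 -> rcons (take t ss) (last x0 ss) = ss.
Proof.
case/lastP: ss => [|s' x] //=; rewrite size_rcons => -[Hs].
by rewrite last_rcons; congr rcons; rewrite -cats1 take_size_cat.
Qed.

Theorem lemma23 (R : realType) (d n b : nat)
  (f : 'I_n -> 'rV[R]_d -> R) (g : 'I_n -> 'rV[R]_d -> 'rV[R]_d)
  (L l gamma eta : R) (xt : 'rV[R]_d) (t : nat) :
  (forall z x, differentiable (f z) x /\ 'd (f z) x =1 (fun h => dotv (g z x) h)) ->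
  (forall z x y, norm2 (g z x - g z y) <= L * norm2 (x - y)) ->
  (forall z x, norm2 (g z x) <= l) ->
  0 < L ->
  (1 <= b)%N -> (8 * b <= n)%N ->
  0 < gamma -> gamma <= 3^-1 ->
  eta * L = gamma * ((b%:R / n%:R) `^ (2 / 3)) ->
  Ebatch b (fun s : t.+1.-tuple {set 'I_n} =>
      favg f (scsg_iter g eta xt s) - favg f (scsg_iter g eta xt (take t s)))
  <= 5 * l ^+ 2 * gamma ^+ 2 / L * ((b%:R / n%:R) `^ (4 / 3)).
Proof.
move=> HF HL Hl L0 b1 nb g0 g3 Heta.
have n0 : (0 < n)%N by apply: leq_trans nb; rewrite muln_gt0 b1.
set p := ((b%:R : R) / n%:R) `^ (2 / 3).
set B := 5 * l ^+ 2 * gamma ^+ 2 / L * ((b%:R : R) / n%:R) `^ (4 / 3).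
have bn0 : 0 < (b%:R / n%:R : R) by apply: divr_gt0; rewrite ltr0n.
have p2 : ((b%:R : R) / n%:R) `^ (4 / 3) = p ^+ 2.
  have -> : (4 / 3 : R) = 2 / 3 + 2 / 3 by field.
  by rewrite powRD ?expr2 // gt_eqF // implybT.
have eta0 : 0 <= eta.
  by rewrite -(pmulr_lge0 eta L0) Heta; apply: mulr_ge0; [exact: ltW | exact: powR_ge0].
have B0 : 0 <= B.
  apply: mulr_ge0; last exact: powR_ge0.
  apply: divr_ge0; last exact: ltW.
  by apply: mulr_ge0; [apply: mulr_ge0 => //; exact: sqr_ge0 | exact: sqr_ge0].
have KB : L / 2 * eta ^+ 2 * (3 * l) ^+ 2 <= B.
  have eeta : eta = gamma * p / L by rewrite -Heta mulfK // gt_eqF.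
  have -> : L / 2 * eta ^+ 2 * (3 * l) ^+ 2 = 9 / 10 * B.
    by rewrite eeta /B p2; field; rewrite gt_eqF.
  lra.
have S1 : \sum_(s : t.+1.-tuple {set 'I_n} | valid_batches b s)
    ((favg f (scsg_iter g eta xt s) - favg f (scsg_iter g eta xt (take t s))) - B) <= 0.
  pose h := fun q : t.-tuple {set 'I_n} * {set 'I_n} => [tuple of rcons q.1 q.2].
  pose hi := fun s : t.+1.-tuple {set 'I_n} => (Tuple (@take_sizeP _ _ s), last (thead s) s).
  have hK : cancel h hi.
    move=> [s1 I]; rewrite /h /hi /=; congr pair; last by rewrite last_rcons.
    by apply: val_inj => /=; rewrite -cats1 take_size_cat ?size_tuple.
  have hiK : cancel hi h.
    move=> s; apply: val_inj => /=.
    exact: (rcons_take_last _ _ _ _ (size_tuple s)).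
  rewrite (reindex h); last exact: (onW_bij _ (Bijective hK hiK)).
  apply: (@le_trans _ _ (\sum_(s1 : t.-tuple {set 'I_n} | valid_batches b s1)
     \sum_(I : {set 'I_n} | #|I| == b)
       (favg f (scsg_iter g eta xt (h (s1, I))) - favg f (scsg_iter g eta xt (take t (h (s1, I)))) - B))).
    rewrite pair_big_dep le_eqVlt; apply/orP; left; apply/eqP.
    apply: eq_big => [[s1 I]|[s1 I] _] //=.
    by rewrite /valid_batches /= all_rcons andbC.
  apply: sumr_le0 => s1 _.
  have e : forall I, scsg_iter g eta xt (h (s1, I)) = scsg_step g eta xt (scsg_iter g eta xt s1) I.
    by move=> I; rewrite /scsg_iter /= foldl_rcons.
  have e' : forall I, take t (h (s1, I)) = s1.
    by move=> I; rewrite /= -cats1 take_size_cat ?size_tuple.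
  under eq_bigr => I _ do rewrite e e'.
  exact: (@step_sum R d n b f g L l eta xt HF HL Hl n0 b1 (ltW L0) eta0 _ _ KB).
rewrite /Ebatch.
set c := #|[pred s : t.+1.-tuple {set 'I_n} | valid_batches b s]|.
have SB : \sum_(s : t.+1.-tuple {set 'I_n} | valid_batches b s) B = c%:R * B.
  rewrite (eq_bigl (fun s => s \in [pred s : t.+1.-tuple {set 'I_n} | valid_batches b s])) //.
  by rewrite sumr_const mulr_natl.
have ES : \sum_(s : t.+1.-tuple {set 'I_n} | valid_batches b s)
    (favg f (scsg_iter g eta xt s) - favg f (scsg_iter g eta xt (take t s)))
  = \sum_(s : t.+1.-tuple {set 'I_n} | valid_batches b s)
    ((favg f (scsg_iter g eta xt s) - favg f (scsg_iter g eta xt (take t s))) - B) + c%:R * B.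
  by rewrite -SB -big_split; apply: eq_bigr => s _; exact: (esym (subrK _ _)).
have [c0|cpos] := eqVneq c 0%N.
  by rewrite c0 invr0 mulr0.
rewrite ler_pdivrMr ?ltr0n ?lt0n // ES mulrC.
by rewrite -[X in _ <= X]add0r lerD2r.
Qed.
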